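(* Let $N\ge1$, $n\ge1$ and $n_0=n_1=\cdots=n_N=n$. Then for every integer $0\le k\le n$, $$d(k)=\frac{(n-k)(n+1-k)}{2}+\frac{a(k)}{2}\big((a(k)-1)N+2b(k)\big),$$ where $a(k)=\lfloor (n-k)/N\rfloor$ and $b(k)=(n-k)\bmod N$. In particular, $d(k)=\frac{(n-k)(n+1-k)}{2}$ whenever $N\ge n$.
   Context: For a vector $\mathbf n=(n_0,\dots,n_N)$ of positive integers, with nondecreasing rearrangement $\tilde n_0\le\cdots\le\tilde n_N$, $c_i=1-i+\min_{k'=1,\dots,N}\lfloor(\sum_{l=0}^{k'}\tilde n_l-i)/k'\rfloor$ for $i=1,\dots,\tilde n_0$, and $d(k)=\sum_{i=k+1}^{\tilde n_0}c_i$; this is the diversity-multiplexing tradeoff at integer multiplexing gain $k$ of the $(n_0,\dots,n_N)$ Rayleigh product channel (channel matrix a product of $N$ independent i.i.d. $\mathcal{CN}(0,1)$ matrices of sizes $n_{i-1}\times n_i$). *)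

(* Defs.v *)
From HB Require Import structures.
From mathcomp Require Import all_boot all_order all_algebra.
Set Implicit Arguments. Unset Strict Implicit. Unset Printing Implicit Defensive.
Import Order.TTheory GRing.Theory Num.Theory.
Local Open Scope ring_scope.

(* A dimension vector (n_0,...,n_N) is a function nv : 'I_N.+1 -> nat. *)

Definition ntil (N : nat) (nv : 'I_N.+1 -> nat) (l : nat) : nat :=
  nth 0%N (sort leq (codom nv)) l.

Definition cterm (N : nat) (nv : 'I_N.+1 -> nat) (i k' : nat) : int :=
  ((\sum_(0 <= l < k'.+1) (ntil nv l)%:Z - i%:Z) %/ k'%:Z)%Z.

Definition c_coef (N : nat) (nv : 'I_N.+1 -> nat) (i : nat) : int :=
  1 - i%:Z + \big[Order.min/cterm nv i 1]_(1 <= k' < N.+1) cterm nv i k'.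

Definition dmt (N : nat) (nv : 'I_N.+1 -> nat) (k : nat) : int :=
  \sum_(k.+1 <= i < (ntil nv 0).+1) c_coef nv i.

(* Main.v *)
Require Import Defs.
From HB Require Import structures.
From mathcomp Require Import all_boot all_order all_algebra.
Import Order.TTheory GRing.Theory Num.Theory.
Local Open Scope ring_scope.

Lemma ntilE (N n l : nat) : (l <= N)%N -> ntil (fun _ : 'I_N.+1 => n) l = n.
Proof.
move=> hl; rewrite /ntil.
have hs : (l < size (sort leq (codom (fun _ : 'I_N.+1 => n))))%N.
  by rewrite size_sort size_codom card_ord.
have := mem_nth 0%N hs; rewrite mem_sort => /codomP [x ->] //.
Qed.

Lemma ctermE (N n i k : nat) : (1 <= k <= N)%N -> (i <= n)%N ->
  cterm (fun _ : 'I_N.+1 => n) i k = (n + (n - i) %/ k)%N%:Z.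
Proof.
move=> /andP [hk1 hkN] hi; rewrite /cterm.
rewrite (eq_big_nat _ _ (F2 := fun _ => n%:Z)); last first.
  by move=> l /andP [_ hl]; rewrite ntilE // -ltnS (leq_trans hl).
rewrite sumr_const_nat subn0.
have -> : (n%:Z *+ k.+1 - i%:Z) = n%:Z * k%:Z + (n - i)%N%:Z.
  have -> : n%:Z *+ k.+1 = (n * k.+1)%N%:Z by rewrite -mulr_natr natz PoszM.
  rewrite subzn; last by rewrite (leq_trans hi) // leq_pmulr.
  by rewrite -PoszM -PoszD mulnS addnC addnBA.
rewrite divzMDl; last by rewrite -lt0n.
by rewrite divz_nat PoszD.
Qed.
Lemma bigmin_le_mem (F : nat -> int) (x : int) (r : seq nat) (j : nat) :
  j \in r -> \big[Order.min/x]_(i <- r) F i <= F j.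
Proof.
elim: r => [//|a r IH]; rewrite inE big_cons => /orP [/eqP -> | hj].
  by rewrite ge_min lexx.
by rewrite ge_min IH // orbT.
Qed.

Lemma cE (N n i : nat) : (1 <= N)%N -> (i <= n)%N ->
  c_coef (fun _ : 'I_N.+1 => n) i = (n.+1 - i + (n - i) %/ N)%N%:Z.
Proof.
move=> hN hi; rewrite /c_coef.
set F := cterm _ i.
have -> : \big[Order.min/F 1%N]_(1 <= k' < N.+1) F k' = F N.
  apply/le_anti/andP; split.
    apply: bigmin_le_mem; by rewrite mem_index_iota ltnSn hN.
  rewrite big_seq.
  apply: (big_ind (fun x => F N <= x)).
  - rewrite /F !ctermE ?hN ?leqnn ?lexx // lez_nat leq_add2l.
    by rewrite divn1 leq_div.
  - by move=> x y hx hy; rewrite le_min hx hy.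
  - move=> k; rewrite mem_index_iota ltnS => hk; rewrite /F !ctermE ?hN ?leqnn ?hk //=.
    rewrite lez_nat leq_add2l leq_div2l //; by case/andP: hk.
rewrite /F ctermE ?hN ?leqnn //.
rewrite !PoszD; have -> : ((n.+1 - i)%N : int) = n.+1%:Z - i%:Z by rewrite subzn // leqW.
rewrite -add1n PoszD addrA; congr (_ + _); by rewrite addrAC.
Qed.

Definition hh (N m : nat) : nat :=
  ((m %/ N) * (m %/ N).-1 * N + 2 * (m %/ N) * (m %% N))%N.

From Stdlib Require Import Lia.

Lemma hstep N m : (0 < N)%N -> hh N m.+1 = (hh N m + 2 * (m %/ N))%N.
Proof.
move=> hN; rewrite /hh.
have hm := divn_eq m N.
have hb : (m %% N < N)%N by rewrite ltn_pmod.
move: hm hb; set a := (m %/ N)%N; set b := (m %% N)%N => hm hb.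
have [e|ne] := eqVneq b.+1 N.
- have hm1 : m.+1 = (a.+1 * N)%N by rewrite hm mulSnr -addnS e.
  rewrite hm1 mulnK // modnMl.
  rewrite -e; case: (a) => [|a'] /=.
    by rewrite !muln0 !mul0n.
  rewrite -!multE -!plusE; lia.
- have hb1 : (b.+1 < N)%N by rewrite ltn_neqAle ne hb.
  have hm1 : m.+1 = (a * N + b.+1)%N by rewrite hm addnS.
  rewrite hm1 divnMDl // modnMDl divn_small // modn_small // addn0.
  rewrite -!multE -!plusE; lia.
Qed.

Lemma sumT N n (hN : (0 < N)%N) m : forall k, (k + m = n)%N ->
  (2 * \sum_(k.+1 <= i < n.+1) (n.+1 - i + (n - i) %/ N))%N = (m * m.+1 + hh N m)%N.
Proof.
elim: m => [|m IH] k hk.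
  rewrite addn0 in hk; by rewrite hk big_geq // /hh div0n mod0n !(muln0, mul0n).
have hk1 : (k.+1 + m = n)%N by rewrite addSnnS.
rewrite big_ltn; last by rewrite ltnS -hk1 leq_addr.
rewrite mulnDr IH // hstep //.
have -> : (n - k.+1 = m)%N by rewrite -hk1 addKn.
have -> : (n.+1 - k.+1 = m.+1)%N by rewrite subSS -hk addKn.
rewrite -!multE -!plusE; lia.
Qed.

Lemma part1 (N n : nat) (hN : (1 <= N)%N) (k : nat) : (k <= n)%N ->
     let a := ((n - k) %/ N)%N in
     let b := ((n - k) %% N)%N in
     ((dmt (fun _ : 'I_N.+1 => n) k)%:~R : rat)
       = ((n - k) * (n + 1 - k))%N%:R / 2
         + a%:R / 2 * ((a%:R - 1) * N%:R + 2 * b%:R).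
Proof.
move=> hk a b.
rewrite /dmt ntilE //.
rewrite (eq_big_nat _ _ (F2 := fun i => (n.+1 - i + (n - i) %/ N)%N%:Z)); last first.
  by move=> i /andP [_ hi]; rewrite cE.
rewrite -(big_morph Posz PoszD (id1 := 0%N) (id2 := 0%N)) //.
rewrite -pmulrn.
set S := (\sum_(_ <= _ < _) _)%N.
have hS := @sumT N n hN (n - k) k (subnKC hk).
have -> : (n + 1 - k = (n - k).+1)%N by rewrite addn1 subSn.
have hS2 : (S%:R : rat) = (2 * S)%N%:R / 2.
  by rewrite natrM [_ * S%:R]mulrC mulfK.
rewrite hS2 hS natrD mulrAC -mulrDl; congr (_ / _); congr (_ + _).
rewrite /hh -/a -/b natrD !natrM.
case: (a) => [|a'] /=; first by rewrite !(mul0r, mulr0, add0r).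
have e : (a'.+1%:R : rat) - 1 = a'%:R by rewrite mulrSr addrK.
rewrite e mulrDr; congr (_ + _); first by rewrite mulrA.
by rewrite mulrA (mulrC a'.+1%:R).
Qed.

Theorem corollary4 (N n : nat) (hN : (1 <= N)%N) (hn : (1 <= n)%N) :
  (forall k : nat, (k <= n)%N ->
     let a := ((n - k) %/ N)%N in
     let b := ((n - k) %% N)%N in
     ((dmt (fun _ : 'I_N.+1 => n) k)%:~R : rat)
       = ((n - k) * (n + 1 - k))%N%:R / 2
         + a%:R / 2 * ((a%:R - 1) * N%:R + 2 * b%:R))
  /\ ((n <= N)%N -> forall k : nat, (k <= n)%N ->
     ((dmt (fun _ : 'I_N.+1 => n) k)%:~R : rat)
       = ((n - k) * (n + 1 - k))%N%:R / 2).
Proof.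
split; first by move=> k hk; apply: part1.
move=> hnN k hk; rewrite part1 //.
have hle : (n - k <= N)%N by rewrite (leq_trans (leq_subr _ _)).
have [hlt|heq] := ltnP (n - k) N.
  by rewrite divn_small // mulr0n !(mul0r, mulr0, addr0).
have e : (n - k = N)%N by apply/eqP; rewrite eqn_leq hle heq.
by rewrite e divnn hN modnn /= subrr mulr0n !(mul0r, mulr0, addr0).
Qed.
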